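(* Let $\alpha \in (0, \tfrac{1}{2}\pi)$ and put $\kappa = \sin \alpha$. Then $$\tfrac{1}{2} \pi \,_2F_1 (\tfrac{1}{3}, \tfrac{2}{3}; 1; \kappa^2) = \sqrt6 \int_{\cos \frac{1}{3} (\pi + \alpha)}^{\cos \frac{1}{3} (\pi - \alpha)} \frac{1}{\sqrt{T_6 (x) - \cos 2 \alpha}} \, {\rm d} x .$$
   Context: $\,_2F_1$ denotes the Gauss hypergeometric function. $T_6$ is the degree six Chebyshev polynomial of the first kind, so that $T_6(\cos t) = \cos 6t$. *)

(* Defs.v *)
From Stdlib Require Import Reals Factorial.
From Coquelicot Require Import Coquelicot.
Open Scope R_scope.

Fixpoint poch (a : R) (n : nat) : R :=
  match n with
  | O => 1
  | S k => poch a k * (a + INR k)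
  end.

Definition hyp2F1 (a b c z : R) : R :=
  Series (fun n => poch a n * poch b n / (poch c n * INR (Factorial.fact n)) * z ^ n).

Fixpoint chebT (n : nat) (x : R) : R :=
  match n with
  | O => 1
  | S O => x
  | S ((S m) as k) => 2 * x * chebT k x - chebT m x
  end.

(* Main.v *)
Require Import Defs.
From Stdlib Require Import Reals.
From Coquelicot Require Import Coquelicot.
From Stdlib Require Import Factorial Lra Lia.
Open Scope R_scope.

Lemma poch_pos a n : 0 < a -> 0 < poch a n.
Proof.
  intro Ha; induction n; simpl. lra.
  apply Rmult_lt_0_compat; auto. pose proof (pos_INR n); lra.
Qed.

Definition cc (n : nat) : R :=
  poch (1/3) n * poch (2/3) n / (poch (1/2) n * INR (fact n)).

Lemma fact_pos n : 0 < INR (fact n).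
Proof. apply lt_0_INR, lt_O_fact. Qed.

Lemma cc_pos n : 0 < cc n.
Proof.
  unfold cc. apply Rdiv_lt_0_compat.
  apply Rmult_lt_0_compat; apply poch_pos; lra.
  apply Rmult_lt_0_compat; [apply poch_pos; lra| apply fact_pos].
Qed.

Lemma cc_S n : cc (S n) * ((1/2 + INR n) * (INR n + 1)) = cc n * ((1/3 + INR n) * (2/3 + INR n)).
Proof.
  unfold cc. simpl poch. rewrite fact_simpl, mult_INR, S_INR.
  pose proof (poch_pos (1/2) n ltac:(lra)). pose proof (fact_pos n).
  pose proof (pos_INR n).
  field. repeat split; lra.
Qed.

Lemma cc_le1 n : cc n <= 1.
Proof.
  induction n.
  - unfold cc; simpl. lra.
  - pose proof (cc_S n) as H. pose proof (pos_INR n). pose proof (cc_pos n).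
    pose proof (cc_pos (S n)).
    assert (cc (S n) * ((1/2 + INR n) * (INR n + 1)) <= 1 * ((1/2 + INR n) * (INR n + 1))) by nra.
    apply Rmult_le_reg_r with ((1/2 + INR n) * (INR n + 1)). nra. lra.
Qed.

Lemma cc_radius : Rbar_le 1 (CV_radius cc).
Proof.
  destruct (CV_radius_bounded cc) as [Hub _].
  apply Hub. exists 1. intro n. rewrite pow1, Rmult_1_r.
  pose proof (cc_pos n); pose proof (cc_le1 n). rewrite Rabs_pos_eq; lra.
Qed.

Lemma in_radius a w : Rbar_le 1 (CV_radius a) -> Rabs w < 1 -> Rbar_lt (Rabs w) (CV_radius a).
Proof.
  intros H Hw. destruct (CV_radius a) as [r| |]; simpl in *; auto; lra.
Qed.

Definition P0 := PSeries cc.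
Definition P1 := PSeries (PS_derive cc).
Definition P2 := PSeries (PS_derive (PS_derive cc)).

Lemma rad1 : Rbar_le 1 (CV_radius (PS_derive cc)).
Proof. rewrite CV_radius_derive; apply cc_radius. Qed.
Lemma rad2 : Rbar_le 1 (CV_radius (PS_derive (PS_derive cc))).
Proof. rewrite !CV_radius_derive; apply cc_radius. Qed.

Lemma P0_derive w : Rabs w < 1 -> is_derive P0 w (P1 w).
Proof. intro; apply is_derive_PSeries, in_radius; auto; apply cc_radius. Qed.
Lemma P1_derive w : Rabs w < 1 -> is_derive P1 w (P2 w).
Proof. intro; apply is_derive_PSeries, in_radius; auto; apply rad1. Qed.

Lemma ps_is_series a w : Rbar_le 1 (CV_radius a) -> Rabs w < 1 ->
  is_series (fun n => a n * w ^ n) (PSeries a w).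
Proof.
  intros H Hw. apply Series_correct, ex_series_Rabs, CV_disk_inside, in_radius; auto.
Qed.

Lemma ser_scal k a l : is_series a l -> is_series (fun n => k * a n) (k * l).
Proof. intro H. exact (is_series_scal k a l H). Qed.
Lemma ser_ext (a b : nat -> R) l : (forall n, a n = b n) -> is_series a l -> is_series b l.
Proof. intros H1 H2. exact (is_series_ext a b l H1 H2). Qed.
Lemma ser_plus a b la lb : is_series a la -> is_series b lb ->
  is_series (fun n => a n + b n) (la + lb).
Proof. intros H1 H2. exact (is_series_plus a b la lb H1 H2). Qed.
Lemma ser_shift a l : a O = 0 -> is_series (fun n => a (S n)) l -> is_series a l.
Proof.
  intros H0 H. apply is_series_decr_1. rewrite H0. unfold plus, opp; simpl.
  rewrite Ropp_0, Rplus_0_r. exact H.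
Qed.

Lemma P_ode w : Rabs w < 1 ->
  w * (1 - w) * P2 w + (1/2 - 2 * w) * P1 w - 2/9 * P0 w = 0.
Proof.
  intro Hw.
  pose proof (ps_is_series _ _ cc_radius Hw) as H0.
  pose proof (ps_is_series _ _ rad1 Hw) as H1.
  pose proof (ps_is_series _ _ rad2 Hw) as H2.
  fold P0 in H0. fold P1 in H1. fold P2 in H2.
  assert (HA : is_series (fun n => INR n * (INR n + 1) * cc (S n) * w ^ n) (w * P2 w)).
  { apply ser_shift. simpl; ring.
    apply ser_ext with (fun n => w * (PS_derive (PS_derive cc) n * w ^ n)).
    2: apply ser_scal; auto.
    intro n. unfold PS_derive. rewrite !S_INR. simpl pow. ring. }
  assert (HB : is_series (fun n => (INR n - 1) * INR n * cc n * w ^ n) (w * (w * P2 w))).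
  { apply ser_shift. simpl; ring.
    apply ser_ext with (fun n => w * (INR n * (INR n + 1) * cc (S n) * w ^ n)).
    2: apply ser_scal; auto.
    intro n. rewrite !S_INR. simpl pow. ring. }
  assert (HD : is_series (fun n => INR n * cc n * w ^ n) (w * P1 w)).
  { apply ser_shift. simpl; ring.
    apply ser_ext with (fun n => w * (PS_derive cc n * w ^ n)).
    2: apply ser_scal; auto.
    intro n. unfold PS_derive. rewrite !S_INR. simpl pow. ring. }
  assert (HT := ser_plus _ _ _ _ (ser_plus _ _ _ _ (ser_plus _ _ _ _ (ser_plus _ _ _ _ HA
     (ser_scal (-1) _ _ HB)) (ser_scal (1/2) _ _ H1)) (ser_scal (-2) _ _ HD)) (ser_scal (-2/9) _ _ H0)).
  assert (HZ := ser_scal 0 _ _ H0). rewrite Rmult_0_l in HZ.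
  apply ser_ext with (b := fun n => 0 * (cc n * w ^ n)) in HT.
  - apply is_series_unique in HT. apply is_series_unique in HZ.
    rewrite HZ in HT. lra.
  - intro n. pose proof (cc_S n) as E. unfold PS_derive. cbv beta. rewrite S_INR.
    transitivity (w ^ n * (cc (S n) * ((1/2 + INR n) * (INR n + 1)) - cc n * ((1/3 + INR n) * (2/3 + INR n)))).
    field. rewrite E. ring.
Qed.

Lemma isR_scal f a b l k : is_RInt f a b l -> is_RInt (fun t => k * f t) a b (k * l).
Proof. intro H. exact (is_RInt_scal f a b k l H). Qed.
Lemma isR_plus f g a b l1 l2 : is_RInt f a b l1 -> is_RInt g a b l2 ->
  is_RInt (fun t => f t + g t) a b (l1 + l2).
Proof. intros H1 H2. exact (is_RInt_plus f g a b l1 l2 H1 H2). Qed.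
Lemma isR_minus f g a b l1 l2 : is_RInt f a b l1 -> is_RInt g a b l2 ->
  is_RInt (fun t => f t - g t) a b (l1 - l2).
Proof. intros H1 H2. exact (is_RInt_minus f g a b l1 l2 H1 H2). Qed.
Lemma isR_uniq (f : R -> R) a b l1 l2 : is_RInt f a b l1 -> is_RInt f a b l2 -> l1 = l2.
Proof. intros H1 H2. apply (is_RInt_unique (V := R_CompleteNormedModule)) in H1. apply (is_RInt_unique (V := R_CompleteNormedModule)) in H2. congruence. Qed.
Lemma isR_ext (f g : R -> R) a b l : (forall t, f t = g t) -> is_RInt f a b l -> is_RInt g a b l.
Proof. intros E H. apply is_RInt_ext with f; auto. Qed.
Lemma exR_cont (f : R -> R) a b : (forall z, continuous f z) -> ex_RInt f a b.
Proof. intros H. apply (ex_RInt_continuous (V := R_CompleteNormedModule)); auto. Qed.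
Lemma isR_RInt (f : R -> R) a b : ex_RInt f a b -> is_RInt f a b (RInt f a b).
Proof. intro H. exact (RInt_correct (V := R_CompleteNormedModule) f a b H). Qed.
Lemma cont_of_der (f : R -> R) x l : is_derive f x l -> continuous f x.
Proof. intro H. apply (ex_derive_continuous (K := R_AbsRing) (V := R_NormedModule)). exists l; auto. Qed.

Definition Hf z := cos z * P0 (sin z ^ 2).
Definition Df z := - sin z * P0 (sin z ^ 2) + 2 * sin z * cos z ^ 2 * P1 (sin z ^ 2).

Lemma sin2_lt1 z : -(PI/2) < z < PI/2 -> Rabs (sin z ^ 2) < 1.
Proof.
  intro H. pose proof (cos_gt_0 z ltac:(lra) ltac:(lra)).
  pose proof (sin2_cos2 z). unfold Rsqr in *.
  rewrite Rabs_pos_eq. nra. nra.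
Qed.

Lemma Derive_P0 w : Rabs w < 1 -> Derive (fun x => P0 x) w = P1 w.
Proof. intro; apply is_derive_unique, P0_derive; auto. Qed.
Lemma Derive_P1 w : Rabs w < 1 -> Derive (fun x => P1 x) w = P2 w.
Proof. intro; apply is_derive_unique, P1_derive; auto. Qed.
Lemma exd_P0 w : Rabs w < 1 -> ex_derive (fun x => P0 x) w.
Proof. intro; eexists; apply P0_derive; auto. Qed.
Lemma exd_P1 w : Rabs w < 1 -> ex_derive (fun x => P1 x) w.
Proof. intro; eexists; apply P1_derive; auto. Qed.

Lemma Hf_derive z : -(PI/2) < z < PI/2 -> is_derive Hf z (Df z).
Proof.
  intro Hz. pose proof (sin2_lt1 z Hz) as Hs.
  replace (sin z ^ 2) with (sin z * (sin z * 1)) in Hs by ring.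
  unfold Hf. auto_derive.
  - apply exd_P0; auto.
  - rewrite Derive_P0; auto. unfold Df. replace (sin z * (sin z * 1)) with (sin z ^ 2) by ring. ring.
Qed.

Lemma Df_derive z : -(PI/2) < z < PI/2 -> is_derive Df z (- Hf z / 9).
Proof.
  intro Hz. pose proof (sin2_lt1 z Hz) as Hs.
  pose proof (P_ode _ Hs) as Ho.
  replace (sin z ^ 2) with (sin z * (sin z * 1)) in Hs, Ho by ring.
  unfold Df. auto_derive.
  - repeat split; first [apply exd_P0 | apply exd_P1]; auto.
  - rewrite Derive_P0, Derive_P1; auto. unfold Hf.
    replace (sin z * (sin z * 1)) with (sin z ^ 2) in * by ring.
    pose proof (sin2_cos2 z) as Hsc. unfold Rsqr in Hsc.
    replace (cos z ^ 2) with (1 - sin z ^ 2) by (simpl; lra).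
    set (w := sin z ^ 2) in *.
    assert (Hc : cos z * cos z = 1 - w) by (unfold w; simpl; lra).
    assert (Hs2 : sin z * sin z = w) by (unfold w; simpl; lra).
    transitivity (cos z * (- P0 w + (2 * (cos z * cos z) - 6 * (sin z * sin z)) * P1 w
       + 4 * (sin z * sin z) * (cos z * cos z) * P2 w)). ring.
    rewrite Hc, Hs2.
    replace (- P0 w + (2 * (1 - w) - 6 * w) * P1 w + 4 * w * (1 - w) * P2 w) with (- P0 w + 8/9 * P0 w) by lra.
    field.
Qed.


Definition Ef z := (Df z + sin (z/3) / 3) ^ 2 + (Hf z - cos (z/3)) ^ 2 / 9.

Lemma Ef_derive z : -(PI/2) < z < PI/2 -> is_derive Ef z 0.
Proof.
  intro Hz. unfold Ef. auto_derive.
  - repeat split; eexists; [apply Df_derive | apply Hf_derive]; auto.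
  - replace (Derive (fun x => Df x) z) with (- Hf z / 9)
      by (symmetry; apply is_derive_unique, Df_derive; auto).
    replace (Derive (fun x => Hf x) z) with (Df z)
      by (symmetry; apply is_derive_unique, Hf_derive; auto).
    field.
Qed.

Lemma Ef_0 : Ef 0 = 0.
Proof.
  unfold Ef, Df, Hf. rewrite sin_0, cos_0. replace (0/3) with 0 by field.
  rewrite sin_0, cos_0. replace (0 ^ 2) with 0 by ring. unfold P0. rewrite PSeries_0.
  unfold cc; simpl. field.
Qed.

Lemma Hf_eq z : -(PI/2) < z < PI/2 -> Hf z = cos (z/3).
Proof.
  intro Hz.
  destruct (MVT_gen Ef 0 z (fun _ => 0)) as [c [Hc Ec]].
  - intros x Hx. apply Ef_derive.
    pose proof (Rmin_l 0 z). pose proof (Rmin_r 0 z). pose proof (Rmax_l 0 z). pose proof (Rmax_r 0 z).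
    unfold Rmin, Rmax in *. destruct (Rle_dec 0 z); lra.
  - intros x Hx. apply continuity_pt_filterlim. apply (ex_derive_continuous (K := R_AbsRing) (V := R_NormedModule)).
    eexists; apply Ef_derive.
    unfold Rmin, Rmax in *. destruct (Rle_dec 0 z); lra.
  - rewrite Ef_0 in Ec. unfold Ef in Ec.
    assert (A1 := pow2_ge_0 (Df z + sin (z/3)/3)); assert (A2 := pow2_ge_0 (Hf z - cos (z/3))).
    assert (E : (Hf z - cos (z / 3)) ^ 2 = 0) by lra.
    simpl in E. assert (Hf z - cos (z/3) = 0) by nra. lra.
Qed.

Definition W n := RInt (fun t => sin t ^ (2 * n)) (-(PI/2)) (PI/2).

Lemma cont_sinpow k x : continuous (fun t => sin t ^ k) x.
Proof.
  apply (ex_derive_continuous (K := R_AbsRing) (V := R_NormedModule)).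
  auto_derive; auto.
Qed.

Lemma ex_RInt_sinpow k a b : ex_RInt (fun t => sin t ^ k) a b.
Proof. apply exR_cont; intros; apply cont_sinpow. Qed.

Lemma W_S n : INR (2 * n + 2) * W (S n) = INR (2 * n + 1) * W n.
Proof.
  refine (_ (is_RInt_derive (V := R_CompleteNormedModule) (fun t => sin t ^ (2*n+1) * cos t)
     (fun t => INR (2*n+1) * sin t ^ (2*n) - INR (2*n+2) * sin t ^ (2 * S n)) (-(PI/2)) (PI/2) _ _)).
  intro H. cbv beta in H.
  assert (H2 := isR_minus _ _ (-(PI/2)) (PI/2) _ _ (isR_scal _ _ _ _ (INR (2*n+1)) (isR_RInt _ (-(PI/2)) (PI/2) (ex_RInt_sinpow (2*n) (-(PI/2)) (PI/2))))
     (isR_scal _ _ _ _ (INR (2*n+2)) (isR_RInt _ (-(PI/2)) (PI/2) (ex_RInt_sinpow (2*S n) (-(PI/2)) (PI/2))))).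
  unfold W. assert (U := isR_uniq _ _ _ _ _ H H2).
  set (m := minus _ _) in U.
  assert (Em : m = 0). { unfold m, minus, plus, opp; simpl. rewrite cos_neg, cos_PI2. ring. }
  lra.
  - intros x _. auto_derive; auto.
    replace (Init.Nat.pred (n + (n + 0) + 1)) with (2*n)%nat by lia.
    replace (n + (n + 0) + 1)%nat with (2*n+1)%nat by lia.
    replace (2 * S n)%nat with (2*n + 2)%nat by lia.
    rewrite !pow_add, !plus_INR.
    replace (INR 1) with 1 by reflexivity. replace (INR 2) with 2 by (simpl; ring).
    pose proof (sin2_cos2 x) as Hc. unfold Rsqr in Hc.
    transitivity ((INR (2*n)+1) * sin x ^ (2*n) * (cos x * cos x) - sin x ^ (2*n) * (sin x * sin x)).
    ring. replace (cos x * cos x) with (1 - sin x * sin x) by lra. ring.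
  - intros x _. apply (ex_derive_continuous (K := R_AbsRing) (V := R_NormedModule)). auto_derive. auto.
Qed.

Lemma W_closed n : W n = PI * poch (1/2) n / INR (fact n).
Proof.
  induction n.
  - unfold W. simpl. rewrite RInt_const. unfold scal; simpl. unfold mult; simpl. field.
  - pose proof (W_S n) as E. rewrite !plus_INR, mult_INR in E.
    replace (INR 1) with 1 in E by reflexivity. replace (INR 2) with 2 in E by (simpl; ring).
    pose proof (pos_INR n). pose proof (fact_pos n).
    apply Rmult_eq_reg_l with (2 * INR n + 2). 2: lra.
    rewrite E, IHn. simpl poch. rewrite fact_simpl, mult_INR, S_INR. field. lra.
Qed.

Lemma Series_zero : Series (fun _ : nat => 0) = 0.
Proof. rewrite (Series_ext _ (fun n => 0 * 0)) by (intro; ring). rewrite Series_scal_l. ring. Qed.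

Lemma tail_bound q w N : 0 <= q < 1 -> 0 <= w <= q ->
  0 <= P0 w - sum_f_R0 (fun k => cc k * w ^ k) N <= q ^ (S N) / (1 - q).
Proof.
  intros Hq Hw.
  assert (Hw1 : Rabs w < 1) by (rewrite Rabs_pos_eq; lra).
  assert (Hex : ex_series (fun k => cc k * w ^ k)).
  { eexists. apply (ps_is_series _ _ cc_radius Hw1). }
  unfold P0, PSeries. rewrite (Series_incr_n _ (S N)) by (auto; lia). simpl pred.
  replace (sum_f_R0 (fun k : nat => cc k * w ^ k) N +
    Series (fun k : nat => cc (S N + k) * w ^ (S N + k)) - sum_f_R0 (fun k : nat => cc k * w ^ k) N)
    with (Series (fun k : nat => cc (S N + k) * w ^ (S N + k))) by ring.
  split.
  - rewrite <- Series_zero. apply Series_le.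
    + intro n. pose proof (cc_pos (S N + n)). pose proof (pow_le w (S N + n) ltac:(lra)). split. lra. nra.
    + apply (ex_series_incr_n (fun k => cc k * w ^ k) (S N)). auto.
  - apply Rle_trans with (Series (fun k => q ^ S N * q ^ k)).
    + apply Series_le.
      * intro n. pose proof (cc_pos (S N + n)). pose proof (cc_le1 (S N + n)).
        pose proof (pow_le w (S N + n) ltac:(lra)).
        assert (w ^ (S N + n) <= q ^ (S N + n)) by (apply pow_incr; lra).
        rewrite <- pow_add. split. nra. nra.
      * apply (ex_series_scal_l (V := R_NormedModule) (q ^ S N) (fun k => q ^ k)), ex_series_geom. rewrite Rabs_pos_eq; lra.
    + rewrite Series_scal_l. change (pow q) with (fun n => q ^ n). rewrite (is_series_unique _ _ (is_series_geom q ltac:(rewrite Rabs_pos_eq; lra))).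
      unfold Rdiv. lra.
Qed.

Definition sumfun q N t := sum_f_R0 (fun k => cc k * (q * sin t ^ 2) ^ k) N.

Lemma int_term q k : is_RInt (fun t => cc k * (q * sin t ^ 2) ^ k) (-(PI/2)) (PI/2) (cc k * q ^ k * W k).
Proof.
  apply isR_ext with (fun t => (cc k * q ^ k) * sin t ^ (2 * k)).
  - intro t. rewrite Rpow_mult_distr, pow_mult. ring.
  - apply isR_scal. apply isR_RInt, ex_RInt_sinpow.
Qed.

Lemma int_partial q N : is_RInt (sumfun q N) (-(PI/2)) (PI/2) (sum_f_R0 (fun k => cc k * q ^ k * W k) N).
Proof.
  induction N.
  - apply (int_term q 0).
  - simpl. apply isR_plus; auto. apply int_term.
Qed.

Lemma poch1 n : poch 1 n = INR (fact n).
Proof.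
  induction n. reflexivity. simpl poch. rewrite IHn, fact_simpl, mult_INR, S_INR. ring.
Qed.

Lemma sin2_le1 (t : R) : sin t ^ 2 <= 1.
Proof. pose proof (sin2_cos2 t). pose proof (pow2_ge_0 (cos t)). unfold Rsqr in *. simpl in *. lra. Qed.

Lemma cont_Ifun q t : 0 <= q < 1 -> continuous (fun t => P0 (q * sin t ^ 2)) t.
Proof.
  intro Hq.
  apply (continuous_comp (fun t => q * sin t ^ 2) P0).
  - apply (ex_derive_continuous (K := R_AbsRing) (V := R_NormedModule)). auto_derive; auto.
  - pose proof (pow2_ge_0 (sin t)). pose proof (sin_bound t).
    pose proof (sin2_le1 t).
    assert (Rabs (q * sin t ^ 2) < 1) by (rewrite Rabs_pos_eq; nra).
    apply (cont_of_der _ _ _ (P0_derive _ H2)).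
Qed.

Lemma int_Ifun q : 0 <= q < 1 ->
  is_RInt (fun t => P0 (q * sin t ^ 2)) (-(PI/2)) (PI/2) (PI * hyp2F1 (1/3) (2/3) 1 q).
Proof.
  intro Hq.
  assert (Hex : ex_RInt (fun t => P0 (q * sin t ^ 2)) (-(PI/2)) (PI/2)).
  { apply exR_cont. intro; apply cont_Ifun; auto. }
  set (L := RInt (fun t => P0 (q * sin t ^ 2)) (-(PI/2)) (PI/2)).
  assert (HL := isR_RInt _ _ _ Hex). fold L in HL.
  assert (HS : is_series (fun k => cc k * q ^ k * W k) L).
  { apply is_series_Reals. intros e He.
    pose proof PI_RGT_0.
    destruct (pow_lt_1_zero q ltac:(rewrite Rabs_pos_eq; lra) (e * (1 - q) / PI)) as [N HN].
    { apply Rdiv_lt_0_compat; nra. }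
    exists N. intros n Hn. unfold R_dist.
    assert (HD := isR_minus _ _ _ _ _ _ HL (int_partial q n)).
    assert (Hb := abs_RInt_le_const (fun t => P0 (q * sin t ^ 2) - sumfun q n t) (-(PI/2)) (PI/2) (q ^ S n / (1 - q)) ltac:(lra) (ex_intro _ _ HD)).
    assert (Hv : RInt (fun t => P0 (q * sin t ^ 2) - sumfun q n t) (-(PI/2)) (PI/2) = L - sum_f_R0 (fun k => cc k * q ^ k * W k) n)
      by (apply (is_RInt_unique (V := R_CompleteNormedModule)); exact HD).
    rewrite Hv in Hb.
    assert (Hqn := HN (S n) ltac:(lia)). rewrite Rabs_pos_eq in Hqn by (apply pow_le; lra).
    rewrite Rabs_minus_sym.
    apply Rle_lt_trans with ((PI / 2 - - (PI / 2)) * (q ^ S n / (1 - q))).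
    - apply Hb. intros t Ht. unfold sumfun.
      pose proof (pow2_ge_0 (sin t)). pose proof (sin_bound t).
      pose proof (sin2_le1 t).
      destruct (tail_bound q (q * sin t ^ 2) n Hq ltac:(split; nra)).
      rewrite Rabs_pos_eq; lra.
    - apply Rmult_lt_reg_r with ((1 - q) / PI * 2). apply Rmult_lt_0_compat; [apply Rdiv_lt_0_compat|]; lra.
      replace ((PI / 2 - - (PI / 2)) * (q ^ S n / (1 - q)) * ((1 - q) / PI * 2)) with (2 * q ^ S n) by (field; lra).
      replace (e * ((1 - q) / PI * 2)) with (2 * (e * (1 - q) / PI)) by (field; lra).
      lra. }
  assert (HS2 : is_series (fun k => poch (1/3) k * poch (2/3) k / (poch 1 k * INR (fact k)) * q ^ k) (L / PI)).
  { apply ser_ext with (fun k => / PI * (cc k * q ^ k * W k)).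
    - intro k. rewrite W_closed, poch1. unfold cc. pose proof (fact_pos k). pose proof (poch_pos (1/2) k ltac:(lra)).
      pose proof PI_RGT_0. field. repeat split; lra.
    - replace (L / PI) with (/ PI * L) by (unfold Rdiv; ring). apply ser_scal; auto. }
  unfold hyp2F1. rewrite (is_series_unique _ _ HS2).
  assert (Hx : forall x : R, PI * (x / PI) = x) by (intro; pose proof PI_RGT_0; field; lra).
  rewrite Hx. auto.
Qed.

Lemma cheb_cos n t : chebT n (cos t) = cos (INR n * t).
Proof.
  assert (H : forall n, chebT n (cos t) = cos (INR n * t) /\ chebT (S n) (cos t) = cos (INR (S n) * t)).
  { induction n0 as [|m [IH1 IH2]].
    - simpl. rewrite Rmult_0_l, cos_0. split; auto. rewrite Rmult_1_l; auto.
    - split; auto.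
      change (chebT (S (S m)) (cos t)) with (2 * cos t * chebT (S m) (cos t) - chebT m (cos t)).
      rewrite IH1, IH2. rewrite !S_INR.
      replace ((INR m + 1 + 1) * t) with ((INR m + 1) * t + t) by ring.
      replace (INR m * t) with ((INR m + 1) * t - t) by ring.
      rewrite cos_plus, cos_minus. ring. }
  apply H.
Qed.

Lemma sin_lt1 p : -(PI/2) < p < PI/2 -> -1 < sin p < 1.
Proof.
  intro H. pose proof (cos_gt_0 p ltac:(lra) ltac:(lra)).
  pose proof (sin2_cos2 p). unfold Rsqr in *. split; nra.
Qed.

Lemma asin_lt x y : -1 <= x -> x < y -> y <= 1 -> asin x < asin y.
Proof.
  intros H1 H2 H3. destruct (Rlt_or_le (asin x) (asin y)) as [H|H]; auto.
  exfalso. pose proof (asin_bound x). pose proof (asin_bound y).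
  destruct (Req_dec (asin x) (asin y)) as [E|E].
  - assert (Z : sin (asin x) = sin (asin y)) by (rewrite E; auto).
    rewrite !sin_asin in Z by lra. lra.
  - assert (Z : sin (asin y) < sin (asin x)) by (apply sin_increasing_1; lra).
    rewrite !sin_asin in Z by lra. lra.
Qed.

Definition Sf k p := asin (k * sin p).


Lemma ksin_bound (k : R) (Hk : 0 < k < 1) (p : R) : -k <= k * sin p <= k.
Proof.
  pose proof (SIN_bound p).
  assert (0 <= k * (1 - sin p)) by (apply Rmult_le_pos; lra).
  assert (0 <= k * (1 + sin p)) by (apply Rmult_le_pos; lra).
  split; lra.
Qed.

Lemma Sf_sin (k : R) (Hk : 0 < k < 1) (p : R) : sin (Sf k p) = k * sin p.
Proof. unfold Sf. pose proof (ksin_bound k Hk p). apply sin_asin. lra. Qed.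

Lemma Sf_bound (k : R) (Hk : 0 < k < 1) (p : R) : -(PI/2) < Sf k p < PI/2.
Proof. unfold Sf. pose proof (ksin_bound k Hk p). apply asin_bound_lt. lra. Qed.

Lemma Sf_cos_pos (k : R) (Hk : 0 < k < 1) (p : R) : 0 < cos (Sf k p).
Proof. pose proof (Sf_bound k Hk p). apply cos_gt_0; lra. Qed.

Lemma Sf_cos (k : R) (Hk : 0 < k < 1) (p : R) : cos (Sf k p) = sqrt (1 - (k * sin p)²).
Proof. unfold Sf. pose proof (ksin_bound k Hk p). apply cos_asin. lra. Qed.

Lemma Sf_opp (k : R) (Hk : 0 < k < 1) (p : R) : Sf k (- p) = - Sf k p.
Proof. unfold Sf. rewrite sin_neg, <- Ropp_mult_distr_r, asin_opp. auto. Qed.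

Lemma asin_lim y : -1 < y < 1 -> is_derive asin y (1 / sqrt (1 - y²)).
Proof.
  intro Hy. apply is_derive_Reals.
  pose proof (derive_pt_asin y Hy) as E. unfold derive_pt in E.
  destruct (derivable_pt_asin y Hy) as [l Hl]. simpl in E. subst. exact Hl.
Qed.

Lemma Sf_derive (k : R) (Hk : 0 < k < 1) (p : R) : is_derive (Sf k) p (k * cos p / cos (Sf k p)).
Proof.
  pose proof (ksin_bound k Hk p).
  unfold Sf. 
  assert (Hd := is_derive_comp asin (fun p => k * sin p) p _ _ (asin_lim (k * sin p) ltac:(lra))
     (ltac:(auto_derive; [auto|ring]) : is_derive (fun p => k * sin p) p (k * cos p))).
  rewrite <- (Sf_cos k Hk) in Hd. unfold Sf in Hd.
  replace (k * cos p / cos (asin (k * sin p))) with (scal (k * cos p) (1 / cos (asin (k * sin p)))).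
  exact Hd. pose proof (Sf_cos_pos k Hk p). unfold Sf in *.
  unfold scal; simpl; unfold mult; simpl. field. lra.
Qed.


Definition g k p := sin ((PI + Sf k p) / 3) / (3 * sqrt 2 * cos (Sf k p)).

Lemma g_sym k (Hk : 0 < k < 1) (p : R) : g k p + g k (-p) = / sqrt 6 * P0 (k ^ 2 * sin p ^ 2).
Proof.
  unfold g. rewrite (Sf_opp k Hk), cos_neg.
  set (s := Sf k p).
  assert (Hc := Sf_cos_pos k Hk p). fold s in Hc.
  assert (HH := Hf_eq s (Sf_bound k Hk p)). unfold Hf in HH.
  assert (E : sin s ^ 2 = k ^ 2 * sin p ^ 2) by (unfold s; rewrite (Sf_sin k Hk); ring).
  rewrite E in HH.
  replace ((PI + s) / 3) with (PI / 3 + s / 3) by field.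
  replace ((PI + - s) / 3) with (PI / 3 - s / 3) by field.
  rewrite sin_plus, sin_minus, sin_PI3, cos_PI3.
  replace 6 with (2 * 3) by ring. rewrite sqrt_mult by lra.
  assert (H2 : 0 < sqrt 2) by (apply sqrt_lt_R0; lra).
  assert (H3 : 0 < sqrt 3) by (apply sqrt_lt_R0; lra).
  assert (H33 : sqrt 3 * sqrt 3 = 3) by (apply sqrt_sqrt; lra).
  rewrite <- HH.
  field_simplify; try lra.
  replace (6 * cos s * sqrt 2) with (2 * (sqrt 3 * sqrt 3) * cos s * sqrt 2) by (rewrite H33; ring).
  field. lra.
Qed.

Lemma exd_Sf k (Hk : 0 < k < 1) (p : R) : ex_derive (fun x => Sf k x) p.
Proof. eexists. apply (Sf_derive k Hk). Qed.

Lemma g_cont k (Hk : 0 < k < 1) (p : R) : continuous (g k) p.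
Proof.
  apply (ex_derive_continuous (K := R_AbsRing) (V := R_NormedModule)).
  unfold g. pose proof (Sf_cos_pos k Hk p).
  assert (H2 : 0 < sqrt 2) by (apply sqrt_lt_R0; lra).
  auto_derive. repeat split; try apply exd_Sf; auto.
  apply Rgt_not_eq. apply Rmult_lt_0_compat; lra.
Qed.

Lemma g_bound k (Hk : 0 < k < 1) (p : R) : Rabs (g k p) <= / sqrt (1 - k ^ 2).
Proof.
  unfold g. pose proof (Sf_cos_pos k Hk p) as Hc.
  assert (H2 : 1 <= sqrt 2). { rewrite <- sqrt_1. apply sqrt_le_1_alt. lra. }
  assert (Hk2 : 0 < sqrt (1 - k ^ 2)) by (apply sqrt_lt_R0; nra).
  assert (Hle : sqrt (1 - k ^ 2) <= cos (Sf k p)).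
  { rewrite (Sf_cos k Hk). apply sqrt_le_1_alt. pose proof (SIN_bound p).
    unfold Rsqr. assert (sin p * sin p <= 1) by nra. simpl. nra. }
  unfold Rdiv. rewrite Rabs_mult, Rabs_inv.
  rewrite (Rabs_pos_eq (3 * sqrt 2 * cos (Sf k p))) by nra.
  pose proof (SIN_bound ((PI + Sf k p) / 3)).
  assert (Rabs (sin ((PI + Sf k p) / 3)) <= 1) by (apply Rabs_le; lra).
  apply Rle_trans with (1 * / (3 * sqrt 2 * cos (Sf k p))).
  apply Rmult_le_compat_r. left; apply Rinv_0_lt_compat; nra. auto.
  rewrite Rmult_1_l. apply Rinv_le_contravar. auto. nra.
Qed.

Lemma J_val k (Hk : 0 < k < 1) :
  RInt (g k) (-(PI/2)) (PI/2) = / sqrt 6 * (PI / 2 * hyp2F1 (1/3) (2/3) 1 (k ^ 2)).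
Proof.
  assert (Hex : ex_RInt (g k) (-(PI/2)) (PI/2)) by (apply exR_cont; intro; apply g_cont; auto).
  set (J := RInt (g k) (-(PI/2)) (PI/2)).
  assert (HJ := isR_RInt _ _ _ Hex). fold J in HJ.
  assert (HR : is_RInt (fun y => g k (- y)) (-(PI/2)) (PI/2) J).
  { assert (H1 : is_RInt (g k) (- (PI/2)) (- - (PI/2)) J) by (rewrite Ropp_involutive; auto).
    apply is_RInt_comp_opp in H1. apply is_RInt_swap in H1. apply is_RInt_opp in H1.
    rewrite opp_opp in H1.
    eapply is_RInt_ext. 2: exact H1. intros x _. apply opp_opp. }
  assert (Hs := isR_plus _ _ _ _ _ _ HJ HR).
  assert (Hq : 0 <= k ^ 2 < 1) by (simpl; nra).
  assert (HI := isR_scal _ _ _ _ (/ sqrt 6) (int_Ifun (k ^ 2) Hq)).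
  assert (HI' : is_RInt (fun y => g k y + g k (- y)) (-(PI/2)) (PI/2) (/ sqrt 6 * (PI * hyp2F1 (1 / 3) (2 / 3) 1 (k ^ 2)))).
  { eapply isR_ext. 2: exact HI. intro t. rewrite (g_sym k Hk). auto. }
  assert (U := isR_uniq _ _ _ _ _ Hs HI').
  set (F := hyp2F1 (1 / 3) (2 / 3) 1 (k ^ 2)) in *.
  assert (Hx : forall x : R, x + x = / sqrt 6 * (PI * F) -> x = / sqrt 6 * (PI / 2 * F)) by (intros; lra).
  apply Hx. exact U.
Qed.


Lemma kappa_bounds alpha : 0 < alpha < PI / 2 -> 0 < sin alpha < 1.
Proof.
  intro Ha. pose proof (cos_gt_0 alpha ltac:(lra) ltac:(lra)).
  pose proof (sin_gt_0 alpha ltac:(lra) ltac:(pose proof PI_RGT_0; lra)).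
  pose proof (sin2_cos2 alpha). unfold Rsqr in *. split; nra.
Qed.

Definition Xf alpha p := cos ((PI + Sf (sin alpha) p) / 3).
Definition dXf alpha p := - sin ((PI + Sf (sin alpha) p) / 3) *
   (sin alpha * cos p / cos (Sf (sin alpha) p) / 3).
Definition fint alpha x := / sqrt (chebT 6 x - cos (2 * alpha)).

Lemma Derive_Sf k (Hk : 0 < k < 1) (p : R) : Derive (fun x => Sf k x) p = k * cos p / cos (Sf k p).
Proof. apply is_derive_unique, (Sf_derive k Hk). Qed.

Lemma X_derive alpha (Ha : 0 < alpha < PI / 2) (p : R) : is_derive (Xf alpha) p (dXf alpha p).
Proof.
  pose proof (kappa_bounds alpha Ha) as Hk.
  unfold Xf. auto_derive. apply exd_Sf; auto.
  rewrite (Derive_Sf _ Hk). unfold dXf. unfold Rdiv. field.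
  pose proof (Sf_cos_pos _ Hk p). lra.
Qed.

Lemma dX_cont alpha (Ha : 0 < alpha < PI / 2) (p : R) : continuous (dXf alpha) p.
Proof.
  pose proof (kappa_bounds alpha Ha) as Hk.
  apply (ex_derive_continuous (K := R_AbsRing) (V := R_NormedModule)).
  unfold dXf. pose proof (Sf_cos_pos _ Hk p).
  auto_derive. repeat split; try apply exd_Sf; auto. lra.
Qed.

Lemma X_continuity alpha (Ha : 0 < alpha < PI / 2) : continuity (Xf alpha).
Proof.
  intro p. apply continuity_pt_filterlim. apply (cont_of_der _ _ _ (X_derive alpha Ha p)).
Qed.

Lemma Sf_PI2 alpha (Ha : 0 < alpha < PI / 2) : Sf (sin alpha) (PI / 2) = alpha.
Proof. unfold Sf. rewrite sin_PI2, Rmult_1_r. apply asin_sin. lra. Qed.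

Lemma Sf_mPI2 alpha (Ha : 0 < alpha < PI / 2) : Sf (sin alpha) (- (PI / 2)) = - alpha.
Proof.
  rewrite (Sf_opp _ (kappa_bounds alpha Ha)), Sf_PI2; auto.
Qed.

Lemma X_PI2 alpha (Ha : 0 < alpha < PI / 2) : Xf alpha (PI / 2) = cos ((PI + alpha) / 3).
Proof. unfold Xf. rewrite Sf_PI2; auto. Qed.

Lemma X_mPI2 alpha (Ha : 0 < alpha < PI / 2) : Xf alpha (- (PI / 2)) = cos ((PI - alpha) / 3).
Proof. unfold Xf. rewrite Sf_mPI2; auto. Qed.

Lemma Sf_range alpha (Ha : 0 < alpha < PI / 2) (p : R) : -(PI/2) < p < PI/2 ->
  - alpha < Sf (sin alpha) p < alpha.
Proof.
  intro Hp. pose proof (kappa_bounds alpha Ha) as Hk. pose proof (sin_lt1 p Hp).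
  assert (E : asin (sin alpha) = alpha) by (apply asin_sin; lra).
  assert (A1 : asin (-(sin alpha)) < asin (sin alpha * sin p)) by (apply asin_lt; nra).
  assert (A2 : asin (sin alpha * sin p) < asin (sin alpha)) by (apply asin_lt; nra).
  rewrite asin_opp, E in A1. rewrite E in A2. unfold Sf. lra.
Qed.

Lemma X_range alpha (Ha : 0 < alpha < PI / 2) (p : R) : -(PI/2) < p < PI/2 ->
  cos ((PI + alpha) / 3) < Xf alpha p < cos ((PI - alpha) / 3).
Proof.
  intro Hp. pose proof (Sf_range alpha Ha p Hp). pose proof PI_RGT_0. unfold Xf.
  split; apply cos_decreasing_1; lra.
Qed.

Lemma cheb_X alpha (Ha : 0 < alpha < PI / 2) (p : R) :
  chebT 6 (Xf alpha p) - cos (2 * alpha) = 2 * (sin alpha * cos p) ^ 2.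
Proof.
  pose proof (kappa_bounds alpha Ha) as Hk.
  unfold Xf. rewrite cheb_cos.
  replace (INR 6 * ((PI + Sf (sin alpha) p) / 3)) with (2 * Sf (sin alpha) p + 2 * PI)
    by (simpl; field).
  rewrite cos_plus, cos_2PI, sin_2PI, !cos_2a_sin, (Sf_sin _ Hk).
  pose proof (sin2_cos2 p). unfold Rsqr in *. simpl.
  assert (Hc : cos p * cos p = 1 - sin p * sin p) by lra.
  transitivity (2 * (sin alpha * sin alpha) * (1 - sin p * sin p)). ring.
  rewrite <- Hc. ring.
Qed.

Lemma fint_X alpha (Ha : 0 < alpha < PI / 2) (p : R) : -(PI/2) < p < PI/2 ->
  fint alpha (Xf alpha p) = / (sqrt 2 * (sin alpha * cos p)).
Proof.
  intro Hp. pose proof (kappa_bounds alpha Ha) as Hk.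
  pose proof (cos_gt_0 p ltac:(lra) ltac:(lra)).
  unfold fint. rewrite cheb_X; auto.
  rewrite sqrt_mult by (try lra; simpl; nra). f_equal. f_equal.
  simpl. rewrite Rmult_1_r. apply sqrt_square. nra.
Qed.

Lemma key alpha (Ha : 0 < alpha < PI / 2) (p : R) : -(PI/2) < p < PI/2 ->
  dXf alpha p * fint alpha (Xf alpha p) = - g (sin alpha) p.
Proof.
  intro Hp. pose proof (kappa_bounds alpha Ha) as Hk.
  pose proof (cos_gt_0 p ltac:(lra) ltac:(lra)).
  pose proof (Sf_cos_pos _ Hk p).
  assert (H2 : 0 < sqrt 2) by (apply sqrt_lt_R0; lra).
  rewrite fint_X; auto. unfold dXf, g. field. repeat split; lra.
Qed.

Lemma fint_cont alpha y : 0 < chebT 6 y - cos (2 * alpha) -> continuous (fint alpha) y.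
Proof.
  intro H. apply (ex_derive_continuous (K := R_AbsRing) (V := R_NormedModule)).
  unfold fint. simpl chebT in *. auto_derive. split; auto.
  split; auto. apply Rgt_not_eq. apply sqrt_lt_R0. auto.
Qed.

Lemma ball_R (x e y : R) : ball x e y <-> Rabs (y - x) < e.
Proof. unfold ball; simpl; unfold AbsRing_ball, abs, minus, plus, opp; simpl. tauto. Qed.

Lemma chas (f : R -> R) a b c : ex_RInt f a b -> ex_RInt f b c -> RInt f a b + RInt f b c = RInt f a c.
Proof. intros H1 H2. exact (RInt_Chasles f a b c H1 H2). Qed.

Lemma RInt_swapR (f : R -> R) a b : ex_RInt f a b -> RInt f b a = - RInt f a b.
Proof. intro H. rewrite <- (opp_RInt_swap (V := R_CompleteNormedModule) f a b H). reflexivity. Qed.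

Lemma inner alpha (Ha : 0 < alpha < PI / 2) pv pu :
  -(PI/2) < pv < PI/2 -> -(PI/2) < pu < PI/2 ->
  let u := Xf alpha pu in let v := Xf alpha pv in
  is_RInt (fint alpha) u v (RInt (g (sin alpha)) pv pu).
Proof.
  intros Hv Hu u v.
  pose proof (kappa_bounds alpha Ha) as Hk.
  assert (Hin : forall x, Rmin pv pu <= x <= Rmax pv pu -> -(PI/2) < x < PI/2).
  { intros x Hx. unfold Rmin, Rmax in Hx. destruct (Rle_dec pv pu); lra. }
  assert (Hc : forall x, Rmin pv pu <= x <= Rmax pv pu -> continuous (fint alpha) (Xf alpha x)).
  { intros x Hx. apply fint_cont. rewrite cheb_X; auto.
    pose proof (Hin x Hx). pose proof (cos_gt_0 x ltac:(lra) ltac:(lra)).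
    assert (0 < sin alpha * cos x) by nra. simpl; nra. }
  assert (Hcomp := is_RInt_comp (V := R_CompleteNormedModule) (fint alpha) (Xf alpha) (dXf alpha) pv pu Hc
     (fun x Hx => conj (X_derive alpha Ha x) (dX_cont alpha Ha x))).
  fold u v in Hcomp.
  assert (Hg : is_RInt (fun y => - g (sin alpha) y) pv pu (- RInt (g (sin alpha)) pv pu)).
  { assert (Z := isR_scal _ _ _ _ (-1) (isR_RInt _ pv pu (exR_cont _ pv pu (g_cont _ Hk)))).
    replace (- RInt (g (sin alpha)) pv pu) with (-1 * RInt (g (sin alpha)) pv pu) by ring.
    eapply isR_ext. 2: exact Z. intro; simpl; ring. }
  assert (Hg2 : is_RInt (fun y => - g (sin alpha) y) pv pu (RInt (fint alpha) v u)).
  { eapply is_RInt_ext. 2: exact Hcomp. intros x Hx. simpl. unfold mult; simpl.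
    apply key; auto. apply Hin. lra. }
  assert (U := isR_uniq _ _ _ _ _ Hg Hg2).
  assert (Hex : ex_RInt (fint alpha) u v).
  { apply (ex_RInt_continuous (V := R_CompleteNormedModule)). intros z Hz.
    destruct (IVT_gen (Xf alpha) pv pu z (X_continuity alpha Ha)) as [x [Hx Ex]].
    { fold u v. rewrite Rmin_comm, Rmax_comm. auto. }
    rewrite <- Ex. apply Hc. auto. }
  rewrite (RInt_swapR _ u v Hex) in U.
  replace (RInt (g (sin alpha)) pv pu) with (RInt (fint alpha) u v) by lra.
  apply isR_RInt. auto.
Qed.

Theorem theorem4 (alpha : R) (Ha : 0 < alpha < PI / 2) :
  let kappa := sin alpha in
  is_RInt_gen (fun x : R => / sqrt (chebT 6 x - cos (2 * alpha)))
    (at_right (cos ((PI + alpha) / 3))) (at_left (cos ((PI - alpha) / 3)))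
    (/ sqrt 6 * (PI / 2 * hyp2F1 (1/3) (2/3) 1 (kappa ^ 2))).
Proof.
  intro kappa. unfold kappa.
  pose proof (kappa_bounds alpha Ha) as Hk.
  rewrite <- (J_val _ Hk).
  set (a := cos ((PI + alpha) / 3)). set (b := cos ((PI - alpha) / 3)).
  set (J := RInt (g (sin alpha)) (- (PI / 2)) (PI / 2)).
  set (M := / sqrt (1 - sin alpha ^ 2)).
  assert (HM : 0 < M).
  { unfold M. apply Rinv_0_lt_compat, sqrt_lt_R0. simpl; nra. }
  pose proof PI2_1.
  unfold is_RInt_gen, filterlimi, filter_le, filtermapi.
  intros P [eps HP].
  assert (Heps := cond_pos eps).
  set (eta := Rmin 1 (eps / (4 * M))).
  assert (Heta : 0 < eta <= 1 /\ eta <= eps / (4 * M)).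
  { unfold eta. split; [split|]. apply Rmin_glb_lt. lra. apply Rdiv_lt_0_compat; lra.
    apply Rmin_l. apply Rmin_r. }
  set (xu := Xf alpha (PI / 2 - eta)). set (xv := Xf alpha (- (PI / 2) + eta)).
  assert (Hxu : a < xu < b) by (apply X_range; auto; lra).
  assert (Hxv : a < xv < b) by (apply X_range; auto; lra).
  apply Filter_prod with (fun u => a < u < xu) (fun v => xv < v < b).
  - assert (Hd : 0 < xu - a) by lra.
    exists (mkposreal _ Hd). intros y Hy Hay. apply ball_R in Hy. simpl in Hy.
    apply Rabs_lt_between in Hy. unfold minus, plus, opp in Hy; simpl in Hy. unfold a, b, xu, xv in *. lra.
  - assert (Hd : 0 < b - xv) by lra.
    exists (mkposreal _ Hd). intros y Hy Hay. apply ball_R in Hy. simpl in Hy.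
    apply Rabs_lt_between in Hy. unfold minus, plus, opp in Hy; simpl in Hy. unfold a, b, xu, xv in *. lra.
  - intros u v Hu Hv. simpl.
    destruct (IVT_gen (Xf alpha) (PI / 2 - eta) (PI / 2) u (X_continuity alpha Ha)) as [pu [Hpu Eu]].
    { rewrite X_PI2; auto. fold a xu. unfold Rmin, Rmax. destruct (Rle_dec xu a); lra. }
    destruct (IVT_gen (Xf alpha) (- (PI / 2)) (- (PI / 2) + eta) v (X_continuity alpha Ha)) as [pv [Hpv Ev]].
    { rewrite X_mPI2; auto. fold b xv. unfold Rmin, Rmax. destruct (Rle_dec b xv); lra. }
    rewrite Rmin_left in Hpu by lra. rewrite Rmax_right in Hpu by lra.
    rewrite Rmin_left in Hpv by lra. rewrite Rmax_right in Hpv by lra.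
    assert (Hpu' : pu <> PI / 2). { intro E. rewrite E, X_PI2 in Eu; auto. fold a in Eu. lra. }
    assert (Hpv' : pv <> - (PI / 2)). { intro E. rewrite E, X_mPI2 in Ev; auto. fold b in Ev. lra. }
    assert (Hin := inner alpha Ha pv pu ltac:(lra) ltac:(lra)). simpl in Hin.
    rewrite Eu, Ev in Hin.
    exists (RInt (g (sin alpha)) pv pu). split; auto.
    apply HP. apply ball_R.
    assert (Hex : forall c d, ex_RInt (g (sin alpha)) c d) by (intros; apply exR_cont; intro; apply g_cont; auto).
    unfold J. rewrite <- (chas (g (sin alpha)) (- (PI / 2)) pv (PI / 2) (Hex _ _) (Hex _ _)).
    rewrite <- (chas (g (sin alpha)) pv pu (PI / 2) (Hex _ _) (Hex _ _)).
    assert (B1 := abs_RInt_le_const (g (sin alpha)) (- (PI / 2)) pv M ltac:(lra) (Hex _ _)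
      (fun t _ => g_bound _ Hk t)).
    assert (B2 := abs_RInt_le_const (g (sin alpha)) pu (PI / 2) M ltac:(lra) (Hex _ _)
      (fun t _ => g_bound _ Hk t)).
    assert (E4 : eta * M <= eps / 4).
    { apply Rle_trans with (eps / (4 * M) * M). apply Rmult_le_compat_r; lra. right; field; lra. }
    assert ((pv - - (PI / 2)) * M <= eta * M) by (apply Rmult_le_compat_r; lra).
    assert ((PI / 2 - pu) * M <= eta * M) by (apply Rmult_le_compat_r; lra).
    apply Rabs_le_between in B1. apply Rabs_le_between in B2.
    apply Rabs_lt_between. unfold minus, plus, opp in *; simpl in *.
    split; lra.
Qed.
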